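(* Let $\alpha,\beta>-1$, $n\ge1$, and $d_{k,n}$ as defined below. For $0\le k\le n$: (i) if $\alpha>\beta$ and $\alpha+\beta\ge-1$, then $d_{k,n}>0$; (ii) if $\alpha<\beta$ and $\alpha+\beta\ge-1$, then $(-1)^{n-k}d_{k,n}>0$; (iii) if $\alpha=\beta>-\tfrac12$, then $d_{k,n}>0$ when $n-k$ is even and $d_{k,n}=0$ when $n-k$ is odd; if $\alpha=\beta=-\tfrac12$, then $d_{n,n}>0$ and $d_{k,n}=0$ for $k=1,\dots,n-1$.
   Context: For $\alpha,\beta>-1$ and $0\le k\le n$, $d_{k,n}=\frac{(n+\alpha+\beta+1)_k(k+\alpha+1)_{n-k}}{(n-k)!\,2^{2k}\Gamma(k+1)}\,{}_3F_2\!\left[\begin{matrix}k-n,\ n+k+\alpha+\beta+1,\ k+\frac12\\ k+\alpha+1,\ 2k+1\end{matrix};1\right]$, with $(a)_k$ the Pochhammer symbol and ${}_3F_2$ the generalized hypergeometric series. Equivalently, $P_n^{(\alpha,\beta)}(x)=d_{0,n}+2\sum_{k=1}^n d_{k,n}T_k(x)$, where $P_n^{(\alpha,\beta)}$ is the Jacobi polynomial and $T_k$ the Chebyshev polynomial of the first kind. *)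

(* Defs.v *)
From Stdlib Require Import Reals Factorial.
Open Scope R_scope.

Fixpoint poch (a : R) (k : nat) : R :=
  match k with
  | O => 1
  | S k' => poch a k' * (a + INR k')
  end.

Definition hyp3F2_term (a1 a2 a3 b1 b2 : R) (j : nat) : R :=
  poch a1 j * poch a2 j * poch a3 j / (poch b1 j * poch b2 j * INR (fact j)).

(* 3F2 at 1 with upper parameter a1 = -N (N a natural number): the series
   terminates, all terms with j > N vanish, so it equals the finite sum
   of the terms j = 0 .. N. *)
Definition hyp3F2_terminating (N : nat) (a2 a3 b1 b2 : R) : R :=
  sum_f_R0 (hyp3F2_term (- INR N) a2 a3 b1 b2) N.

(* d_{k,n} (alpha, beta); Gamma(k+1) = k!. Here k - n = -(n-k) for k <= n. *)
Definition dkn (alpha beta : R) (k n : nat) : R :=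
  poch (INR n + alpha + beta + 1) k * poch (INR k + alpha + 1) (n - k)
  / (INR (fact (n - k)) * 2 ^ (2 * k) * INR (fact k))
  * hyp3F2_terminating (n - k) (INR n + INR k + alpha + beta + 1)
      (INR k + / 2) (INR k + alpha + 1) (2 * INR k + 1).

(* Main.v *)
Require Import Defs.
From Stdlib Require Import Reals Factorial Lra Lia Psatz Arith.
Open Scope R_scope.

Lemma poch_pos a k : 0 < a -> 0 < poch a k.
Proof.
  intros Ha. induction k; simpl. lra.
  apply Rmult_lt_0_compat; [assumption| pose proof (pos_INR k); lra].
Qed.

Lemma poch_add a b p q : b = a + INR p -> poch a (p + q) = poch a p * poch b q.
Proof.
  intros ->. induction q.
  - rewrite Nat.add_0_r. simpl. ring.
  - rewrite Nat.add_succ_r. simpl. rewrite IHq. rewrite plus_INR. ring.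
Qed.

Lemma poch_neg N j : (j <= N)%nat ->
  poch (- INR N) j * INR (fact (N - j)) = (-1) ^ j * INR (fact N).
Proof.
  induction j; intros Hj.
  - simpl. rewrite Nat.sub_0_r. ring.
  - assert (HN : (N - j = S (N - S j))%nat) by lia.
    assert (IH := IHj ltac:(lia)). rewrite HN in IH.
    rewrite fact_simpl, mult_INR in IH.
    rewrite <- HN in IH. rewrite minus_INR in IH by lia.
    simpl. lra.
Qed.

Lemma poch_half k : poch (/2) k * 2 ^ (2 * k) * INR (fact k) = INR (fact (2 * k)).
Proof.
  induction k.
  - simpl. lra.
  - replace (2 * S k)%nat with (S (S (2 * k))) by lia.
    rewrite !fact_simpl, !mult_INR. rewrite <- IHk.
    replace (S (S (2 * k))) with (2 * k + 2)%nat by lia.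
    rewrite pow_add. rewrite !S_INR, mult_INR. simpl (INR 2). simpl pow.
    change (poch (/2) (S k)) with (poch (/2) k * (/2 + INR k)).
    rewrite plus_INR, mult_INR. simpl (INR 2). field.
Qed.

Lemma poch_shift1 p q : poch (INR p + 1) q * INR (fact p) = INR (fact (p + q)).
Proof.
  induction q.
  - rewrite Nat.add_0_r. simpl. ring.
  - rewrite Nat.add_succ_r, fact_simpl, mult_INR. rewrite <- IHq.
    change (poch (INR p + 1) (S q)) with (poch (INR p + 1) q * (INR p + 1 + INR q)).
    rewrite S_INR, plus_INR. ring.
Qed.

Definition Bc (al be : R) (n i : nat) : R :=
  poch (INR n + al + be + 1) i * poch (INR i + al + 1) (n - i) * poch (/2) i
  / INR (fact (n - i)).

Definition Dc (al be : R) (n k : nat) : R :=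
  sum_f_R0 (fun j => (-1) ^ j * Bc al be n (k + j)
                     / (INR (fact j) * INR (fact (2 * k + j)))) (n - k).

Lemma dkn_D al be n k : -1 < al -> (k <= n)%nat -> dkn al be k n = Dc al be n k.
Proof.
  intros Hal Hk. unfold dkn, Dc, hyp3F2_terminating.
  rewrite scal_sum. apply sum_eq. intros j Hj.
  set (N := (n - k)%nat) in *.
  unfold Bc, hyp3F2_term.
  replace (n - (k + j))%nat with (N - j)%nat by (unfold N; lia).
  rewrite (poch_add (INR n + al + be + 1) (INR n + INR k + al + be + 1) k j) by ring.
  assert (EY : poch (INR k + al + 1) N =
               poch (INR k + al + 1) j * poch (INR (k + j) + al + 1) (N - j)).
  { replace N with (j + (N - j))%nat at 1 by lia. apply poch_add. rewrite plus_INR; ring. }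
  rewrite EY.
  rewrite (poch_add (/2) (INR k + /2) k j) by ring.
  assert (EQ := poch_shift1 (2 * k) j).
  rewrite mult_INR in EQ. simpl (INR 2) in EQ.
  replace ((1+1)*INR k + 1) with (2*INR k+1) in EQ by ring.
  assert (EH := poch_half k).
  assert (EP := poch_neg N j Hj).
  assert (Hf : forall m, INR (fact m) <> 0) by apply INR_fact_neq_0.
  assert (HY : poch (INR k + al + 1) j <> 0).
  { apply Rgt_not_eq, poch_pos. pose proof (pos_INR k); lra. }
  assert (HQ : poch (2 * INR k + 1) j <> 0).
  { apply Rgt_not_eq, poch_pos. pose proof (pos_INR k); lra. }
  assert (HH : poch (/2) k <> 0) by (apply Rgt_not_eq, poch_pos; lra).
  assert (H2 : 2 ^ (2 * k) <> 0) by (apply pow_nonzero; lra).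
  rewrite <- EQ, <- EH.
  apply (Rmult_eq_reg_r (INR (fact (N - j)))); [|apply Hf].
  replace ((-1) ^ j) with (poch (- INR N) j * INR (fact (N - j)) / INR (fact N))
    by (rewrite EP; field; apply Hf).
  field. repeat split; auto.
Qed.

Lemma B_step al be n i : -1 < al -> (i < n)%nat ->
  Bc al be n (S i) * (INR (S i) + al) =
  Bc al be n i * (INR n + al + be + 1 + INR i) * (INR i + /2) * (INR n - INR i).
Proof.
  intros Hal Hi. unfold Bc.
  replace (n - i)%nat with (S (n - S i)) by lia.
  change (S (n - S i)) with (1 + (n - S i))%nat at 1.
  rewrite (poch_add (INR i + al + 1) (INR (S i) + al + 1) 1 (n - S i)) by (rewrite S_INR; simpl; ring).
  rewrite fact_simpl, mult_INR.
  replace (INR (S (n - S i))) with (INR n - INR i) by (rewrite S_INR, minus_INR by lia; rewrite S_INR; ring).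
  change (poch (INR n + al + be + 1) (S i)) with (poch (INR n + al + be + 1) i * (INR n + al + be + 1 + INR i)).
  change (poch (/2) (S i)) with (poch (/2) i * (/2 + INR i)).
  change (poch (INR i + al + 1) 1) with (1 * (INR i + al + 1 + 0)).
  assert (Hn : INR n - INR i <> 0).
  { apply lt_INR in Hi. lra. }
  rewrite S_INR. field. split; [apply INR_fact_neq_0| exact Hn].
Qed.

Lemma telesc (z : nat -> R) L : sum_f_R0 (fun s => z (S s) - z s) L = z (S L) - z 0%nat.
Proof. induction L; simpl. ring. rewrite IHL. ring. Qed.

Lemma telesc2 (z Z : nat -> R) L :
  (forall s, (s < L)%nat -> Z s = z (S s)) -> Z L = 0 -> z 0%nat = 0 ->
  sum_f_R0 (fun s => Z s - z s) L = 0.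
Proof.
  intros H1 H2 H3. destruct L.
  - simpl. lra.
  - rewrite tech5. rewrite (sum_eq _ (fun s => z (S s) - z s)).
    + rewrite telesc. rewrite H2, H3. ring.
    + intros i Hi. rewrite H1 by lia. reflexivity.
Qed.

Definition gg al be n p s :=
  (-1) ^ s * Bc al be n (p + s) / (INR (fact s) * INR (fact (2 * p + s))).

Lemma D_p al be n p : Dc al be n p = sum_f_R0 (gg al be n p) (n - p).
Proof. reflexivity. Qed.

Lemma D_Sp al be n p : (S p <= n)%nat ->
  Dc al be n (S p) =
  sum_f_R0 (fun s => - gg al be n p s * INR s / (2 * INR p + 1 + INR s)) (n - p).
Proof.
  intros Hp. replace (n - p)%nat with (S (n - S p)) by lia.
  rewrite decomp_sum by lia. rewrite Nat.pred_succ.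
  assert (0 <= INR p) by apply pos_INR.
  match goal with |- _ = ?a + _ => replace a with 0 by (simpl INR; field; lra) end.
  rewrite Rplus_0_l. unfold Dc.
  apply sum_eq. intros j Hj. unfold gg.
  replace (p + S j)%nat with (S p + j)%nat by lia.
  replace (2 * p + S j)%nat with (S (2 * p + j)) by lia.
  replace (2 * S p + j)%nat with (S (S (2 * p + j))) by lia.
  rewrite !fact_simpl, !mult_INR, !S_INR, plus_INR, mult_INR.
  simpl (INR 2). simpl pow.
  assert (0 <= INR j) by apply pos_INR.
  field. repeat split; try apply INR_fact_neq_0; lra.
Qed.

Lemma D_SSp al be n p : (S (S p) <= n)%nat ->
  Dc al be n (S (S p)) =
  sum_f_R0 (fun s => gg al be n p s * INR s * (INR s - 1)
     / ((2 * INR p + 1 + INR s) * (2 * INR p + 2 + INR s))) (n - p).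
Proof.
  intros Hp. replace (n - p)%nat with (S (S (n - S (S p)))) by lia.
  rewrite decomp_sum by lia. rewrite Nat.pred_succ.
  rewrite decomp_sum by lia. rewrite Nat.pred_succ.
  assert (0 <= INR p) by apply pos_INR.
  match goal with |- _ = ?a + (?b + _) => replace a with 0 by (simpl INR; field; lra);
     replace b with 0 by (simpl INR; field; lra) end.
  rewrite !Rplus_0_l. unfold Dc.
  apply sum_eq. intros j Hj. unfold gg.
  replace (p + S (S j))%nat with (S (S p) + j)%nat by lia.
  replace (2 * p + S (S j))%nat with (S (S (2 * p + j))) by lia.
  replace (2 * S (S p) + j)%nat with (S (S (S (S (2 * p + j))))) by lia.
  rewrite !fact_simpl, !mult_INR, !S_INR, plus_INR, mult_INR.
  simpl (INR 2). simpl pow.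
  assert (0 <= INR j) by apply pos_INR.
  field. repeat split; try apply INR_fact_neq_0; lra.
Qed.

Lemma recur al be n p : -1 < al -> (S p <= n)%nat ->
  (INR n - INR p) * (INR n + INR p + 1 + al + be) * Dc al be n p =
  (INR n + INR p + 2) * (INR n - INR p - 1 + al + be) *
    sum_f_R0 (fun s => gg al be n p s * INR s * (INR s - 1)
     / ((2 * INR p + 1 + INR s) * (2 * INR p + 2 + INR s))) (n - p)
  + 2 * (al - be) * (INR p + 1) * Dc al be n (S p).
Proof.
  intros Hal Hp. rewrite D_p, D_Sp by exact Hp.
  set (g := gg al be n p).
  set (z := fun s => - 4 * (INR p + 1) * (INR p + INR s + al) * INR s * g s
                       / (2 * INR p + 1 + INR s)).
  set (Z := fun s => 4 * (INR p + 1) * g s * (INR n + al + be + INR p + 1 + INR s)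
             * (INR p + INR s + /2) * (INR n - INR p - INR s)
             / ((2 * INR p + 2 + INR s) * (2 * INR p + 1 + INR s))).
  assert (Hs : sum_f_R0 (fun s => Z s - z s) (n - p) = 0).
  { apply telesc2.
    - intros s Hs. unfold Z, z, g, gg.
      assert (BS := B_step al be n (p + s) Hal ltac:(lia)).
      replace (p + S s)%nat with (S (p + s)) by lia.
      replace (2 * p + S s)%nat with (S (2 * p + s)) by lia.
      rewrite !fact_simpl, !mult_INR.
      rewrite !S_INR, !plus_INR in *. rewrite mult_INR. simpl (INR 2).
      assert (0 <= INR p) by apply pos_INR. assert (0 <= INR s) by apply pos_INR.
      assert (Hne : INR p + INR s + 1 + al <> 0) by lra.
      match goal with |- context [Bc al be n (S (p + s))] =>
        replace (Bc al be n (S (p + s))) with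
          (Bc al be n (p + s) * (INR n + al + be + 1 + (INR p + INR s)) *
           (INR p + INR s + / 2) * (INR n - (INR p + INR s)) / (INR p + INR s + 1 + al))
          by (rewrite <- BS; field; exact Hne) end.
      simpl pow. field. repeat split; try apply INR_fact_neq_0; lra.
    - unfold Z. rewrite minus_INR by lia. field.
      assert (0 <= INR p) by apply pos_INR.
      assert (INR p <= INR n) by (apply le_INR; lia). split; lra.
    - unfold z. simpl. field. assert (0 <= INR p) by apply pos_INR. lra. }
  match goal with |- ?a * ?G = ?b * ?E + ?c * ?H =>
    assert (Hc : a * G - b * E - c * H = sum_f_R0 (fun s => Z s - z s) (n - p)) end.
  { rewrite !scal_sum, <- !minus_sum. apply sum_eq. intros s _.
    unfold Z, z. assert (0 <= INR p) by apply pos_INR. assert (0 <= INR s) by apply pos_INR.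
    field. lra. }
  lra.
Qed.

Lemma recurE al be n p : -1 < al -> (S p <= n)%nat ->
  exists E, (S p = n -> E = 0) /\ ((S (S p) <= n)%nat -> E = Dc al be n (S (S p))) /\
  (INR n - INR p) * (INR n + INR p + 1 + al + be) * Dc al be n p =
  (INR n + INR p + 2) * (INR n - INR p - 1 + al + be) * E
  + 2 * (al - be) * (INR p + 1) * Dc al be n (S p).
Proof.
  intros Hal Hp. eexists. split; [|split]; [| |apply recur; assumption].
  - intros Hn. replace (n - p)%nat with 1%nat by lia. simpl.
    assert (0 <= INR p) by apply pos_INR. field. lra.
  - intros H. rewrite D_SSp by exact H. reflexivity.
Qed.

Lemma Dn_pos al be n : -1 < al -> -1 < be -> (1 <= n)%nat -> 0 < Dc al be n n.
Proof.
  intros Ha Hb Hn. unfold Dc. rewrite Nat.sub_diag. simpl sum_f_R0.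
  rewrite Nat.add_0_r. unfold Bc. rewrite Nat.sub_diag. simpl poch. simpl fact.
  apply le_INR in Hn. simpl INR in *.
  assert (0 < INR (fact (n + n + 0))) by apply INR_fact_lt_0.
  assert (0 < poch (INR n + al + be + 1) n) by (apply poch_pos; lra).
  assert (0 < poch (/2) n) by (apply poch_pos; lra).
  replace (1 * (poch (INR n + al + be + 1) n * 1 * poch (/ 2) n / 1) /
    (1 * INR (fact (n + n + 0)))) with
    (poch (INR n + al + be + 1) n * poch (/ 2) n / INR (fact (n + n + 0))) by (field; lra).
  apply Rdiv_lt_0_compat; [apply Rmult_lt_0_compat|]; assumption.
Qed.

Lemma a_pos al be n p : -1 < al -> -1 < be -> (S p <= n)%nat ->
  0 < (INR n - INR p) * (INR n + INR p + 1 + al + be).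
Proof.
  intros Ha Hb Hp. apply le_INR in Hp. rewrite S_INR in Hp.
  assert (0 <= INR p) by apply pos_INR. nra.
Qed.

Lemma pos_gen al be n sg : sg * sg = 1 -> -1 < al -> -1 < be -> al + be >= -1 ->
  0 < sg * (al - be) -> (1 <= n)%nat ->
  forall t, (t <= n)%nat -> 0 < sg ^ t * Dc al be n (n - t) /\
     ((0 < t)%nat -> 0 < sg ^ (t - 1) * Dc al be n (n - t + 1)).
Proof.
  intros Hs Ha Hb Hg Hd Hn. induction t; intros Ht.
  - split; [|lia]. rewrite Nat.sub_0_r. simpl. rewrite Rmult_1_l. now apply Dn_pos.
  - set (p := (n - S t)%nat).
    assert (Hp : (S p <= n)%nat) by (unfold p; lia).
    assert (E1 : (n - t)%nat = S p) by (unfold p; lia).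
    destruct (IHt ltac:(lia)) as [I1 I2].
    rewrite E1 in I1. replace (n - S t + 1)%nat with (S p) by (unfold p; lia); fold p.
    replace (S t - 1)%nat with t by lia. split; [|intros; rewrite Nat.add_1_r; exact I1].
    destruct (recurE al be n p Ha Hp) as (E & HE0 & HE1 & HR).
    assert (Ha' := a_pos al be n p Ha Hb Hp).
    assert (Hpn : INR p = INR n - INR t - 1).
    { unfold p. rewrite minus_INR by lia. rewrite S_INR. ring. }
    assert (Hc : 0 < sg ^ S t * (2 * (al - be) * (INR p + 1) * Dc al be n (S p))).
    { simpl. replace (sg * sg ^ t * (2 * (al - be) * (INR p + 1) * Dc al be n (S p)))
        with ((sg * (al - be)) * (2 * (INR p + 1)) * (sg ^ t * Dc al be n (S p))) by ring.
      assert (0 <= INR p) by apply pos_INR.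
      apply Rmult_lt_0_compat; [apply Rmult_lt_0_compat|]; lra. }
    assert (Hb' : 0 <= sg ^ S t * ((INR n + INR p + 2) * (INR n - INR p - 1 + al + be) * E)).
    { destruct t as [|t'].
      - rewrite HE0 by (unfold p; lia). lra.
      - rewrite HE1 by (unfold p; lia).
        replace (S (S p)) with (n - S t' + 1)%nat by (unfold p; lia).
        assert (I3 := I2 ltac:(lia)). replace (S t' - 1)%nat with t' in I3 by lia.
        replace (sg ^ S (S t')) with (sg ^ t' * (sg * sg)) by (simpl; ring).
        rewrite Hs.
        assert (0 <= INR n + INR p + 2) by (pose proof (pos_INR n); pose proof (pos_INR p); lra).
        assert (0 <= INR n - INR p - 1 + al + be) by (rewrite Hpn; rewrite S_INR; pose proof (pos_INR t'); lra).
        replace (sg ^ t' * 1 * ((INR n + INR p + 2) * (INR n - INR p - 1 + al + be) *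
                    Dc al be n (n - S t' + 1)))
          with ((INR n + INR p + 2) * (INR n - INR p - 1 + al + be) *
                    (sg ^ t' * Dc al be n (n - S t' + 1))) by ring.
        apply Rmult_le_pos; [apply Rmult_le_pos|]; lra. }
    assert (0 < (INR n - INR p) * (INR n + INR p + 1 + al + be) * (sg ^ S t * Dc al be n p)).
    { replace ((INR n - INR p) * (INR n + INR p + 1 + al + be) * (sg ^ S t * Dc al be n p))
        with (sg ^ S t * ((INR n - INR p) * (INR n + INR p + 1 + al + be) * Dc al be n p)) by ring.
      rewrite HR. lra. }
    apply (Rmult_lt_reg_l ((INR n - INR p) * (INR n + INR p + 1 + al + be))); lra.
Qed.

Definition Par (t : nat) (x : R) := (Nat.Even t -> 0 < x) /\ (Nat.Odd t -> x = 0).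

Lemma par_gen al n : - / 2 < al -> (1 <= n)%nat ->
  forall t, (t <= n)%nat -> Par t (Dc al al n (n - t)) /\
     ((0 < t)%nat -> Par (t - 1) (Dc al al n (n - t + 1))).
Proof.
  intros Ha Hn. assert (Ha1 : -1 < al) by lra. induction t; intros Ht.
  - split; [|lia]. rewrite Nat.sub_0_r. split.
    + intros _. now apply Dn_pos.
    + intros H. exfalso. apply (Nat.Even_Odd_False 0); [exists 0%nat; reflexivity|exact H].
  - set (p := (n - S t)%nat).
    assert (Hp : (S p <= n)%nat) by (unfold p; lia).
    assert (E1 : (n - t)%nat = S p) by (unfold p; lia).
    destruct (IHt ltac:(lia)) as [I1 I2].
    rewrite E1 in I1. replace (n - S t + 1)%nat with (S p) by (unfold p; lia); fold p.
    replace (S t - 1)%nat with t by lia. split; [|intros; rewrite Nat.add_1_r; exact I1].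
    destruct (recurE al al n p Ha1 Hp) as (E & HE0 & HE1 & HR).
    assert (Ha' := a_pos al al n p Ha1 Ha1 Hp).
    assert (Hpn : INR p = INR n - INR t - 1).
    { unfold p. rewrite minus_INR by lia. rewrite S_INR. ring. }
    replace (2 * (al - al) * (INR p + 1) * Dc al al n (S p)) with 0 in HR by ring.
    rewrite Rplus_0_r in HR.
    set (a := (INR n - INR p) * (INR n + INR p + 1 + al + al)) in *.
    assert (HD : Dc al al n p = (INR n + INR p + 2) * (INR n - INR p - 1 + al + al) * E / a)
      by (rewrite <- HR; field; lra).
    destruct t as [|t'].
    + rewrite HE0 in HD by (unfold p; lia). split.
      * intros H. exfalso. apply Nat.Even_succ in H.
        apply (Nat.Even_Odd_False 0); [exists 0%nat; reflexivity|exact H].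
      * intros _. rewrite HD. unfold Rdiv. ring.
    + rewrite HE1 in HD by (unfold p; lia).
      replace (S (S p)) with (n - S t' + 1)%nat in HD by (unfold p; lia).
      assert (I3 := I2 ltac:(lia)). replace (S t' - 1)%nat with t' in I3 by lia.
      destruct I3 as [I3 I4].
      assert (0 < (INR n + INR p + 2) * (INR n - INR p - 1 + al + al)).
      { rewrite Hpn, S_INR. pose proof (pos_INR t'). pose proof (pos_INR n). assert (INR (S (S t')) <= INR n) by (apply le_INR; lia). rewrite !S_INR in *.
        apply Rmult_lt_0_compat; lra. }
      split.
      * intros HH. apply Nat.Even_succ, Nat.Odd_succ in HH.
        rewrite HD. apply Rdiv_lt_0_compat; [apply Rmult_lt_0_compat|]; auto.
      * intros HH. apply Nat.Odd_succ, Nat.Even_succ in HH.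
        rewrite HD, I4 by exact HH. unfold Rdiv. ring.
Qed.

Lemma cheb_gen al n : al = - / 2 -> (1 <= n)%nat ->
  forall t, (S t <= n)%nat -> Dc al al n (n - S t) = 0 /\
     ((0 < t)%nat -> Dc al al n (n - t) = 0).
Proof.
  intros Ha Hn. assert (Ha1 : -1 < al) by lra. induction t; intros Ht.
  - split; [|lia].
    assert (Hp : (S (n - 1) <= n)%nat) by lia.
    destruct (recurE al al n (n - 1) Ha1 Hp) as (E & HE0 & HE1 & HR).
    rewrite HE0 in HR by lia.
    assert (Ha' := a_pos al al n (n - 1) Ha1 Ha1 Hp).
    apply (Rmult_eq_reg_l ((INR n - INR (n - 1)) * (INR n + INR (n - 1) + 1 + al + al))); [|apply Rgt_not_eq; assumption].
    rewrite HR. ring.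
  - set (p := (n - S (S t))%nat).
    assert (Hp : (S p <= n)%nat) by (unfold p; lia).
    destruct (IHt ltac:(lia)) as [I1 I2].
    replace (n - S t)%nat with (S p) in I1 |- * by (unfold p; lia).
    split; [|intros; exact I1].
    destruct (recurE al al n p Ha1 Hp) as (E & HE0 & HE1 & HR).
    assert (Ha' := a_pos al al n p Ha1 Ha1 Hp).
    rewrite HE1 in HR by (unfold p; lia).
    assert (Hz : (INR n + INR p + 2) * (INR n - INR p - 1 + al + al) * Dc al al n (S (S p)) = 0).
    { destruct t as [|t'].
      - assert (INR p = INR n - 2).
        { unfold p. rewrite minus_INR by lia. simpl. ring. }
        replace (INR n - INR p - 1 + al + al) with 0 by lra. ring.
      - replace (S (S p)) with (n - S t')%nat by (unfold p; lia).
        rewrite I2 by lia. ring. }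
    apply (Rmult_eq_reg_l ((INR n - INR p) * (INR n + INR p + 1 + al + al))); [|apply Rgt_not_eq; assumption].
    rewrite HR, Hz. ring.
Qed.

Theorem mainTheorem3 (alpha beta : R) (n : nat) :
  -1 < alpha -> -1 < beta -> (1 <= n)%nat ->
  (forall k : nat, (k <= n)%nat ->
     (alpha > beta -> alpha + beta >= -1 -> dkn alpha beta k n > 0) /\
     (alpha < beta -> alpha + beta >= -1 -> (-1) ^ (n - k) * dkn alpha beta k n > 0) /\
     (alpha = beta -> alpha > - / 2 ->
        (Nat.Even (n - k) -> dkn alpha beta k n > 0) /\
        (Nat.Odd (n - k) -> dkn alpha beta k n = 0))) /\
  (alpha = - / 2 -> beta = - / 2 ->
     dkn alpha beta n n > 0 /\
     (forall k : nat, (1 <= k)%nat -> (k <= n - 1)%nat -> dkn alpha beta k n = 0)).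
Proof.
  intros Ha Hb Hn. split.
  - intros k Hk. rewrite (dkn_D alpha beta n k Ha Hk).
    assert (Hkk : k = (n - (n - k))%nat) by lia.
    split; [|split].
    + intros H1 H2.
      destruct (pos_gen alpha beta n 1 ltac:(ring) Ha Hb H2 ltac:(lra) Hn (n - k) ltac:(lia))
        as [P _].
      rewrite pow1, Rmult_1_l, <- Hkk in P. lra.
    + intros H1 H2.
      destruct (pos_gen alpha beta n (-1) ltac:(ring) Ha Hb H2 ltac:(lra) Hn (n - k) ltac:(lia))
        as [P _].
      rewrite <- Hkk in P. lra.
    + intros H1 H2. subst beta.
      destruct (par_gen alpha n H2 Hn (n - k) ltac:(lia)) as [[P1 P2] _].
      rewrite <- Hkk in P1, P2. split; intros; [apply Rlt_gt, P1 | apply P2]; assumption.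
  - intros H1 H2. replace beta with alpha by lra. split.
    + rewrite dkn_D by (auto; lia). apply Rlt_gt, Dn_pos; auto.
    + intros k Hk1 Hk2. rewrite dkn_D by (auto; lia).
      destruct (cheb_gen alpha n H1 Hn (n - k - 1) ltac:(lia)) as [P _].
      replace (n - S (n - k - 1))%nat with k in P by lia. exact P.
Qed.
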